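(* Let $t\in[n]$ and let $S\subseteq N$ be a maximal $t$-switchable set in which all elements are pairwise connected in $S$. Then $S=N$.
   Context: Fix positive integers $n, r_1,\dots,r_n$, let $N=[r_1]\times\cdots\times[r_n]$, and let $R$ be the polynomial ring over a field in the variables $x_a$, $a\in N$. For $a,b\in N$ and $i\in[n]$, ${\rm s}(i,a,b)\in N$ has $i$-th component $b_i$ and other components equal to those of $a$. Let $d(a,b)=\#\{j: a_j\neq b_j\}$ and $f_{i,a,b}=x_ax_b-x_{{\rm s}(i,a,b)}x_{{\rm s}(i,b,a)}$. A subset $S\subseteq N$ is $t$-switchable if for all $a,b\in S$ with $d(a,b)=2$ and all $i\in[t]$, ${\rm s}(i,a,b)\in S$. Elements $a,b\in S$ are connected in $S$ if there are $a_0=a,\dots,a_k=b$ in $S$ with $d(a_{j-1},a_j)\le 1$ for all $j$. For $t$-switchable $S$: $\tilde{\mathcal{I}}^{\langle t\rangle}_S=(f_{i,a,b}: i\in[t],\ a,b \text{ connected in } S)$, $\mathrm{Var}^{\langle t\rangle}_S=(x_a: a\notin S)$, $P^{\langle t\rangle}_S=\mathrm{Var}^{\langle t\rangle}_S+\tilde{\mathcal{I}}^{\langle t\rangle}_S$. A $t$-switchable $S$ is maximal $t$-switchable if for every $t$-switchable $T$ properly containing $S$, $P^{\langle t\rangle}_S$ and $P^{\langle t\rangle}_T$ are incomparable under inclusion. *)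

(* Defs.v *)
From HB Require Import structures.
From mathcomp Require Import all_boot all_order all_algebra.
From mathcomp Require Import mpoly.
Set Implicit Arguments. Unset Strict Implicit. Unset Printing Implicit Defensive.
Import GRing.Theory.
Local Open Scope ring_scope.

(* N = [r_1] x ... x [r_n]; coordinate i (0-based, i : 'I_n) ranges over 'I_(r i).
   Paper index i in [n] corresponds to the ordinal i-1. *)
Definition Nset (n : nat) (r : 'I_n -> nat) : finType :=
  {dffun forall i : 'I_n, 'I_(r i)}.

Section Defs.
Variables (F : fieldType) (n : nat) (r : 'I_n -> nat).
Local Notation N := (Nset r).

Definition sw (i : 'I_n) (a b : N) : N :=
  [ffun j => if j == i then b j else a j].

Definition dist (a b : N) : nat := #|[set j | a j != b j]|.

Definition PR := {mpoly F[#|N|]}.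
Definition xv (a : N) : PR := 'X_(enum_rank a).

Definition fpol (i : 'I_n) (a b : N) : PR :=
  xv a * xv b - xv (sw i a b) * xv (sw i b a).

(* t-switchable ; paper's i in [t] = ordinals i with i < t *)
Definition switchable (t : nat) (S : {set N}) : Prop :=
  forall a b : N, a \in S -> b \in S -> dist a b = 2 ->
    forall i : 'I_n, (i < t)%N -> sw i a b \in S.

Definition connected_in (S : {set N}) (a b : N) : Prop :=
  exists p : seq N, [/\ all (fun c => c \in S) (a :: p),
                        path (fun c d => (dist c d <= 1)%N) a p & last a p = b].

Definition ideal_gen (G : PR -> Prop) (p : PR) : Prop :=
  exists s : seq (PR * PR), (forall q, q \in s -> G q.2) /\
                            p = \sum_(q <- s) q.1 * q.2.

Definition P_gens (t : nat) (S : {set N}) (p : PR) : Prop :=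
  (exists a, a \notin S /\ p = xv a) \/
  (exists (i : 'I_n) (a b : N), [/\ (i < t)%N, connected_in S a b & p = fpol i a b]).

Definition Pideal (t : nat) (S : {set N}) : PR -> Prop := ideal_gen (P_gens t S).

Definition ideal_incl (I J : PR -> Prop) : Prop := forall p, I p -> J p.

Definition maximal_switchable (t : nat) (S : {set N}) : Prop :=
  switchable t S /\
  forall T : {set N}, switchable t T -> S \proper T ->
    ~ ideal_incl (Pideal t S) (Pideal t T) /\ ~ ideal_incl (Pideal t T) (Pideal t S).

End Defs.

(* Main.v *)
Require Import Defs.
From HB Require Import structures.
From mathcomp Require Import all_boot all_order all_algebra.
From mathcomp Require Import mpoly.
Import GRing.Theory.
Local Open Scope ring_scope.

Section H.
Variables (F : fieldType) (n : nat) (r : 'I_n -> nat).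

Lemma ig_add (G : PR F r -> Prop) p q :
  ideal_gen G p -> ideal_gen G q -> ideal_gen G (p + q).
Proof.
move=> [s1 [H1 ->]] [s2 [H2 ->]]; exists (s1 ++ s2); split; last by rewrite big_cat.
by move=> x; rewrite mem_cat => /orP [/H1|/H2].
Qed.

Lemma ig_gen (G : PR F r -> Prop) c g : G g -> ideal_gen G (c * g).
Proof.
move=> Hg; exists [:: (c, g)]; split; last by rewrite big_seq1.
by move=> x; rewrite inE => /eqP ->.
Qed.

Lemma ig_mul (G : PR F r -> Prop) c p : ideal_gen G p -> ideal_gen G (c * p).
Proof.
move=> [s [H ->]]; exists (map (fun q => (c * q.1, q.2)) s); split.
  by move=> x /mapP [y Hy ->] /=; apply: H.
by rewrite big_map mulr_sumr; apply: eq_bigr => i _; rewrite mulrA.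
Qed.

Lemma sw_sw (i : 'I_n) (a b : Nset r) :
  sw i (sw i a b) (sw i b a) = a.
Proof. by apply/ffunP => j; rewrite !ffunE; case: (j == i). Qed.

Lemma sw_sw2 (i : 'I_n) (a b : Nset r) :
  sw i (sw i b a) (sw i a b) = b.
Proof. by apply/ffunP => j; rewrite !ffunE; case: (j == i). Qed.
End H.

Theorem proposition4p8 (F : fieldType) (n : nat) (r : 'I_n -> nat)
  (r_pos : forall i, (0 < r i)%N) (t : nat) (ht : (1 <= t <= n)%N)
  (S : {set Nset r}) :
  maximal_switchable F t S ->
  (forall a b, a \in S -> b \in S -> connected_in S a b) ->
  S = setT.
Proof.
move=> [_ Hmax] Hc.
apply/eqP; apply/negPn/negP => HS.
have Hsw : switchable t (setT : {set Nset r}) by move=> *; rewrite in_setT.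
have Hp : S \proper setT by rewrite properT.
have [_ H2] := Hmax setT Hsw Hp; apply: H2.
have Hg : forall p, P_gens (F:=F) t setT p -> Pideal (F:=F) t S p.
  move=> p [[a [Ha _]]|[i [a [b [Hi _ ->]]]]]; first by rewrite in_setT in Ha.
  have var : forall c, c \notin S -> P_gens (F:=F) t S (xv F c) by move=> c Hc'; left; exists c.
  case: (boolP ((a \in S) && (b \in S))) => [/andP [Ha Hb]|Hab].
    rewrite -(mul1r (fpol _ _ _ _)); apply: ig_gen; right.
    by exists i, a, b; split => //; apply: Hc.
  case: (boolP ((sw i a b \in S) && (sw i b a \in S))) => [/andP [Hc1 Hd1]|Hcd].
    have -> : fpol F i a b = (-1) * fpol F i (sw i a b) (sw i b a).
      rewrite /fpol sw_sw sw_sw2 mulN1r opprB mulrC.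
      by congr (_ - _); rewrite mulrC.
    apply: ig_gen; right; exists i, (sw i a b), (sw i b a); split => //.
    by apply: Hc.
  rewrite /fpol; apply: ig_add.
    move: Hab; rewrite negb_and => /orP [Ha|Hb].
      by rewrite mulrC; apply: ig_gen; apply: var.
    by apply: ig_gen; apply: var.
  move: Hcd; rewrite negb_and => /orP [Ha|Hb].
    by rewrite -mulrN mulrC; apply: ig_gen; apply: var.
  by rewrite -mulNr; apply: ig_gen; apply: var.
move=> p [s [Hs ->]].
elim: s Hs => [|q s IH] Hs.
  by rewrite big_nil; exists [::]; split => //; rewrite big_nil.
rewrite big_cons; apply: ig_add; last by apply: IH => x Hx; apply: Hs; rewrite inE Hx orbT.
apply: ig_mul; apply: Hg; apply: Hs; exact: mem_head.
Qed.
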